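(* For $\alpha,\epsilon\in\mathbb{C}$ with $\epsilon=0$ or $\epsilon^{-1}\notin\mathbb{Z}$, let $f(m,n)=\frac{(\alpha+n+\alpha\epsilon m)(1+\epsilon n)}{1+\epsilon(m+n)}$ for $m,n\in\mathbb{Z}$ (the structure constants of the left-symmetric algebra $V_{\alpha,\epsilon}$ on the Witt algebra with basis $\{x_n\}$, $x_mx_n=f(m,n)x_{m+n}$). Consider functions $\omega:\mathbb{Z}\times\mathbb{Z}\to\mathbb{C}$ satisfying, for all $m,n,l\in\mathbb{Z}$, $$\omega(m,n)-\omega(n,m)=\tfrac{1}{12}(n^3-n)\delta_{m+n,0},\qquad (n-m)\omega(m+n,l)=\omega(m,n+l)f(n,l)-\omega(n,m+l)f(m,l).$$ If $\alpha\neq0$ or $\epsilon=0$, no such $\omega$ exists. If $\alpha=0$, $\epsilon\neq0$ and $\epsilon^{-1}\notin\mathbb{Z}$, there is exactly one such $\omega$, namely $$\omega(m,n)=\tfrac{1}{24}\big(n^3-n-(\epsilon-\epsilon^{-1})n^2\big)\delta_{m+n,0}.$$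
   Context: These conditions on $\omega$ are exactly the conditions for the product $\theta\theta=x_m\theta=\theta x_m=0$, $x_mx_n=f(m,n)x_{m+n}+\omega(m,n)\theta$ on $V_{\alpha,\epsilon}\oplus\mathbb{C}\theta$ to be a left-symmetric algebra (i.e. $(xy)z-x(yz)=(yx)z-y(xz)$) whose commutator is the Virasoro bracket $[x_m,x_n]=(n-m)x_{m+n}+\delta_{m+n,0}\frac{n^3-n}{12}\theta$, $[\theta,x_n]=0$. *)

(* Defs.v *)
(* The complex numbers are R[i] = complex R for R : realType
   (every realType is a complete archimedean ordered field, i.e. (a copy of) the reals). *)
From HB Require Import structures.
From mathcomp Require Import all_boot all_order all_algebra.
From mathcomp Require Import complex reals.
Set Implicit Arguments. Unset Strict Implicit. Unset Printing Implicit Defensive.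
Import Order.TTheory GRing.Theory Num.Theory.
Local Open Scope ring_scope.

Section Defs.
Variable (C : fieldType).

Definition fLSA (alpha eps : C) (m n : int) : C :=
  (alpha + n%:~R + alpha * eps * m%:~R) * (1 + eps * n%:~R)
    / (1 + eps * (m + n)%:~R).

Definition delta0 (k : int) : C := (k == 0)%:R.

Definition omega_cond (alpha eps : C) (omega : int -> int -> C) : Prop :=
  (forall m n : int,
     omega m n - omega n m = 12%:R^-1 * ((n%:~R) ^+ 3 - n%:~R) * delta0 (m + n))
  /\
  (forall m n l : int,
     (n - m)%:~R * omega (m + n) l
     = omega m (n + l) * fLSA alpha eps n l - omega n (m + l) * fLSA alpha eps m l).

Definition omega_sol (eps : C) (m n : int) : C :=
  24%:R^-1 * ((n%:~R) ^+ 3 - n%:~R - (eps - eps^-1) * (n%:~R) ^+ 2) * delta0 (m + n).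

End Defs.

(* Main.v *)
Require Import Defs.
From HB Require Import structures.
From mathcomp Require Import all_boot all_order all_algebra.
From mathcomp Require Import complex reals.
From mathcomp Require Import ring zify.
From Stdlib Require Import FunctionalExtensionality.
Import Order.TTheory GRing.Theory Num.Theory.
Local Open Scope ring_scope.
Local Open Scope complex_scope.

Lemma nzL {R : realType} {eps : R[i]}
  (heps : eps = 0 \/ ~ (exists k : int, eps^-1 = k%:~R)) (k : int) :
  1 + eps * k%:~R != 0.
Proof.
case: heps => [->|h]; first by rewrite mul0r addr0 oner_eq0.
apply/eqP => E; apply: h; exists (-k).
have ke : eps * k%:~R = -1.
  by apply/eqP; rewrite -addr_eq0 addrC E.
have hne : eps != 0.
  by apply/eqP => e0; move: ke; rewrite e0 mul0r => /eqP; rewrite eq_sym oppr_eq0 oner_eq0.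
apply: (mulfI hne); rewrite mulfV // rmorphN mulrN ke opprK //.
Qed.

Lemma delta0_0 (C : fieldType) : delta0 C 0 = 1.
Proof. by rewrite /delta0 eqxx. Qed.

Lemma delta0_nz (C : fieldType) k : k != 0 -> delta0 C k = 0.
Proof. by move=> h; rewrite /delta0 (negbTE h). Qed.

Lemma sol_cond {R : realType} {eps : R[i]}
  (heps : eps = 0 \/ ~ (exists k : int, eps^-1 = k%:~R)) (hne : eps != 0) :
  omega_cond 0 eps (omega_sol eps).
Proof.
split.
- move=> m n; rewrite /omega_sol (addrC n m).
  have [hz|hz] := eqVneq (m + n) 0.
    have -> : m = - n by lia.
    rewrite addNr delta0_0 rmorphN.
    by field.
  by rewrite delta0_nz // !mulr0 subrr.
- move=> m n l; rewrite /omega_sol (addrCA n m l) !addrA.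
  have [hz|hz] := eqVneq (m + n + l) 0; last by rewrite delta0_nz // !mulr0 !mul0r subrr.
  have hl : l = - (m + n) by lia.
  subst l; rewrite hz delta0_0 /fLSA.
  rewrite (_ : n + - (m + n) = - m); last by lia.
  rewrite (_ : m + - (m + n) = - n); last by lia.
  have hM := nzL heps (- m); have hN := nzL heps (- n).
  rewrite !rmorphN /= in hM hN.
  rewrite ?rmorphN ?rmorphD ?rmorphB /= ?rmorphN.
  field.
  by rewrite hM hN hne.
Qed.

Lemma uniq_part {R : realType} {eps : R[i]}
  (heps : eps = 0 \/ ~ (exists k : int, eps^-1 = k%:~R)) (hne : eps != 0)
  {omega : int -> int -> R[i]} (hc : omega_cond 0 eps omega) :
  omega = omega_sol eps.
Proof.
have [s1 s2] := sol_cond heps hne.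
case: hc => c1 c2.
pose d m n := omega m n - omega_sol eps m n.
have d1 : forall m n, d m n = d n m.
  move=> m n; have e := c1 m n; have e' := s1 m n.
  apply/eqP; rewrite -subr_eq0; apply/eqP.
  rewrite (_ : d m n - d n m = (omega m n - omega n m) - (omega_sol eps m n - omega_sol eps n m)).
    by rewrite e e' subrr.
  rewrite /d; ring.
have d2 : forall m n l, (n - m)%:~R * d (m + n) l
    = d m (n + l) * fLSA 0 eps n l - d n (m + l) * fLSA 0 eps m l.
  move=> m n l; rewrite /d mulrBr c2 s2; ring.
have f0 : forall l, fLSA 0 eps 0 l = l%:~R.
  move=> l; rewrite /fLSA !add0r !mul0r addr0 mulfK //; exact: nzL.
have fk0 : forall k, fLSA 0 eps k 0 = 0.
  by move=> k; rewrite /fLSA !mul0r mulr0z !addr0 !mul0r.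
have hR : forall m l, (m + l)%:~R * d m l = d 0 (m + l) * fLSA 0 eps m l.
  move=> m l; have := d2 m 0 l; rewrite addr0 !add0r f0 rmorphN rmorphD => E.
  transitivity (d m l * l%:~R - (- m%:~R * d m l)); first by ring.
  by rewrite E; ring.
have hk : forall k, k != 0 -> d 0 k = 0.
  move=> k hk; rewrite d1; have := hR k 0; rewrite addr0 fk0 mulr0 => /eqP.
  by rewrite mulf_eq0 intr_eq0 (negbTE hk) /= => /eqP.
have hoff : forall m l, m + l != 0 -> d m l = 0.
  move=> m l h; have := hR m l; rewrite hk // mul0r => /eqP.
  by rewrite mulf_eq0 intr_eq0 (negbTE h) /= => /eqP.
have h00 : d 0 0 = 0.
  have := hR (-1) 1; rewrite (_ : -1 + 1 = 0) // mulr0z mul0r => /esym /eqP.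
  rewrite mulf_eq0 => /orP [/eqP //|].
  rewrite /fLSA (_ : -1 + 1 = 0) //.
  have h1 := nzL heps 1.
  rewrite mulr0z mulr0 addr0 divr1 mul0r mul0r addr0 add0r mul1r.
  by rewrite (negbTE h1).
have E1 := d2 (-2) 1 1.
rewrite (_ : -2 + 1 = -1) // (_ : 1 + 1 = 2) // (d1 1 (-1)) in E1.
have E2 := d2 2 (-1) (-1).
rewrite (_ : 2 + -1 = 1) // (_ : -1 + -1 = -2) // (d1 1 (-1)) (d1 2 (-2)) in E2.
set x := d (-1) 1 in E1 E2.
set y := d (-2) 2 in E1 E2.
rewrite /fLSA in E1 E2.
have n1 : 1 + eps * 1 != 0 := nzL heps 1.
have n2 : 1 + eps * 2 != 0 := nzL heps 2.
have nm1 : 1 + eps * -1 != 0 by have := nzL heps (-1); rewrite rmorphN.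
have nm2 : 1 + eps * -2 != 0 by have := nzL heps (-2); rewrite rmorphN.
have P1 : 3 * x * ((1 + 2 * eps) * (1 - eps)) = (1 + eps) * (1 - eps) * y - (1 + eps) * (1 + 2 * eps) * x.
  rewrite (_ : 3 * x = (1 - -2)%:~R * x); last by field.
  rewrite E1.
  field; repeat (apply/andP; split). exact nm1. exact n2.
have P2 : 3 * x * ((1 - 2 * eps) * (1 + eps)) = (1 - eps) * (1 + eps) * y - (1 - eps) * (1 - 2 * eps) * x.
  rewrite (_ : 3 * x = - ((-1 - 2)%:~R * x)); last by field.
  rewrite E2.
  field; repeat (apply/andP; split). by move: n1; rewrite mulr1. exact nm2.
have hx : x = 0.
  have : 12 * eps * x = 0.
    rewrite (_ : 12 * eps * x = (3 * x * ((1 + 2 * eps) * (1 - eps)) - ((1 + eps) * (1 - eps) * y - (1 + eps) * (1 + 2 * eps) * x))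
       - (3 * x * ((1 - 2 * eps) * (1 + eps)) - ((1 - eps) * (1 + eps) * y - (1 - eps) * (1 - 2 * eps) * x))); last by ring.
    by rewrite P1 P2 !subrr.
  move/eqP; rewrite !mulf_eq0 (negbTE hne) orbF => /orP [|/eqP //].
  by rewrite pnatr_eq0.
have hy : y = 0.
  move: P1; rewrite hx !mulr0 mul0r subr0 => /esym/eqP; rewrite !mulf_eq0 => /orP [/orP [] |/eqP //].
    by move: n1; rewrite mulr1 => /negbTE ->.
  by move: nm1; rewrite mulrN1 => /negbTE ->.
have hx' : d (-1) 1 = 0 := hx.
have hy' : d (-2) 2 = 0 := hy.
have hpos : forall n : nat, d (- (n.+1)%:Z) (n.+1)%:Z = 0.
  elim=> [|n IH]; first exact: hx'.
  case: n IH => [|n] IH; first exact: hy'.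
  have E := d2 (- (n.+2)%:Z) (-1) (n.+3)%:Z.
  rewrite (_ : - (n.+2)%:Z + -1 = - (n.+3)%:Z) in E; last by lia.
  rewrite (_ : -1 + (n.+3)%:Z = (n.+2)%:Z) in E; last by lia.
  rewrite (_ : - (n.+2)%:Z + (n.+3)%:Z = 1) in E; last by lia.
  rewrite IH hx' !mul0r subrr in E.
  move/eqP: E; rewrite mulf_eq0 intr_eq0 => /orP [/eqP h|/eqP //].
  exfalso; lia.
apply: functional_extensionality => m; apply: functional_extensionality => l.
apply/eqP; rewrite -subr_eq0; apply/eqP; rewrite -/(d m l).
have [h|h] := eqVneq (m + l) 0; last exact: hoff.
have -> : m = - l by lia.
case: l {h} => n.
  case: n => [|n]; last exact: hpos.
  by rewrite oppr0.
by rewrite NegzE opprK d1; exact: hpos.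
Qed.

Lemma nonex {R : realType} {alpha eps : R[i]}
  (heps : eps = 0 \/ ~ (exists k : int, eps^-1 = k%:~R))
  (h : alpha != 0 \/ eps = 0) (omega : int -> int -> R[i])
  (hc : omega_cond alpha eps omega) : False.
Proof.
case: hc => c1 c2.
have [ha|ha] := eqVneq alpha 0.
  have he : eps = 0 by case: h => //; rewrite ha eqxx.
  subst alpha eps.
  have fe : forall m n : int, fLSA (0 : R[i]) 0 m n = n%:~R.
    by move=> m n; rewrite /fLSA !mul0r !addr0 divr1 mulr1 add0r.
  have E1 := c2 (-2) 1 1; rewrite (_ : -2 + 1 = -1) // (_ : 1 + 1 = 2) // !fe in E1.
  have E2 := c2 2 (-1) (-1); rewrite (_ : 2 + -1 = 1) // (_ : -1 + -1 = -2) // !fe in E2.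
  have S1 := c1 (-1) 1; rewrite (_ : -1 + 1 = 0) // delta0_0 in S1.
  have S2 := c1 (-2) 2; rewrite (_ : -2 + 2 = 0) // delta0_0 in S2.
  move: E1 E2 S1 S2.
  set a := omega (-1) 1; set b := omega 1 (-1); set c := omega (-2) 2; set e := omega 2 (-2).
  move=> E1 E2 S1 S2.
  have H : c - e = 2 * (a - b).
    transitivity (2 * (a - b) - ((1 - -2)%:~R * a - (c * (1:int)%:~R - b * (1:int)%:~R))
       - ((-1 - 2)%:~R * b - (e * (-1:int)%:~R - a * (-1:int)%:~R))); first by ring.
    by rewrite E1 E2 !subrr !subr0.
  rewrite S1 S2 in H.
  have : (1:R[i]) = 0.
    transitivity (2 * (12^-1 * ((2:int)%:~R ^+ 3 - (2:int)%:~R) * 1)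
       - 4 * (12^-1 * ((1:int)%:~R ^+ 3 - (1:int)%:~R) * 1) : R[i]); first by field.
    by rewrite H; ring.
  by move/eqP; rewrite oner_eq0.
have f0g : forall l, fLSA alpha eps 0 l = alpha + l%:~R.
  move=> l; rewrite /fLSA !add0r mulr0z mulr0 addr0 mulfK //; exact: nzL.
have hR : forall m, alpha * omega m (-m) = omega 0 0 * fLSA alpha eps m (-m).
  move=> m; have := c2 m 0 (-m); rewrite addr0 !add0r subrr f0g rmorphN => E.
  transitivity (omega m (-m) * (alpha + - m%:~R) - (- m%:~R * omega m (-m))); first by ring.
  by rewrite E; ring.
have fd : forall m, fLSA alpha eps (-m) m - fLSA alpha eps m (-m) = 2 * m%:~R.
  by move=> m; rewrite /fLSA addNr subrr mulr0z mulr0 addr0 !divr1 rmorphN; ring.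
have key : forall m, alpha * (12^-1 * (m%:~R ^+ 3 - m%:~R)) = 2 * m%:~R * omega 0 0.
  move=> m; have := c1 (-m) m; rewrite addNr delta0_0 mulr1 => S.
  rewrite -S mulrBr; have := hR (-m); rewrite opprK => ->; rewrite hR -mulrBr fd; ring.
have K2 := key 2; have K3 := key 3.
have : alpha * 5 = 0.
  transitivity (4 * (alpha * (12^-1 * ((3:int)%:~R ^+ 3 - (3:int)%:~R)) - 2 * (3:int)%:~R * omega 0 0)
     - 6 * (alpha * (12^-1 * ((2:int)%:~R ^+ 3 - (2:int)%:~R)) - 2 * (2:int)%:~R * omega 0 0)).
    by field.
  by rewrite K2 K3 !subrr !mulr0 subrr.
move/eqP; rewrite mulf_eq0 (negbTE ha) /= pnatr_eq0 //.
Qed.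

Theorem theorem4p1 (R : realType) (alpha eps : R[i])
  (heps : eps = 0 \/ ~ (exists k : int, eps^-1 = k%:~R)) :
  ((alpha != 0 \/ eps = 0) -> ~ (exists omega : int -> int -> R[i], omega_cond alpha eps omega))
  /\
  ((alpha = 0 /\ eps != 0 /\ ~ (exists k : int, eps^-1 = k%:~R)) ->
     omega_cond alpha eps (omega_sol eps) /\
     (forall omega : int -> int -> R[i], omega_cond alpha eps omega -> omega = omega_sol eps)).
Proof.
split.
  by move=> h [omega hc]; exact: (nonex heps h omega hc).
case=> ha [hne _]; subst alpha.
split; first exact: sol_cond heps hne.
by move=> omega hc; exact: (uniq_part heps hne hc).
Qed.
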